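(* Let $C_5$ be the simplicial complex on vertex set $\mathbb{Z}_5=\{1,2,3,4,5\}$ whose maximal faces are $\{i,i+1\}$, $i\in\mathbb{Z}_5$ (the boundary complex dual to a pentagon $P_5$). For $d\in\mathbb{Z}$ let \[\lambda_d=\begin{pmatrix}1&0&-1&-1&d\\0&1&1&0&-1\end{pmatrix},\] and for $i\in\mathbb{Z}_5$ say that $\lambda_d$ has type $(i,d)$ when its columns are assigned, from left to right, to the vertices $i+1,i+2,i+3,i+4,i$. Then every $\lambda_d$ of any type is a complete non-singular fan-giving characteristic map over $C_5$, and every complete non-singular fan over $C_5$ (i.e. every fan-giving complete non-singular characteristic map $\lambda:\mathbb{Z}_5\to\mathbb{Z}^2$ over $C_5$) is, up to change of basis of $\mathbb{Z}^2$, of type $(i,d)$ for some $(i,d)\in\mathbb{Z}_5\times\mathbb{Z}$. The Davis–Januszkiewicz classes $(i,d)$ are pairwise distinct except for the five coincidences $(i,0)=(i+1,1)$, $i\in\mathbb{Z}_5$.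
   Context: A characteristic map of dimension 2 over $C_5$ is a map $\lambda:\mathbb{Z}_5\to\mathbb{Z}^2$ with $\lambda(i),\lambda(i+1)$ linearly independent; it is non-singular if each pair $\lambda(i),\lambda(i+1)$ is a $\mathbb{Z}$-basis, and fan-giving if the cones $\operatorname{pos}\{\lambda(i),\lambda(i+1)\}$ together with their faces form a fan (here complete). Two characteristic maps over $C_5$ are Davis–Januszkiewicz equivalent if one is obtained from the other by applying some $R\in GL_2(\mathbb{Z})$. *)

(* Defs.v *)
From mathcomp Require Import all_boot all_order all_algebra.
Set Implicit Arguments. Unset Strict Implicit. Unset Printing Implicit Defensive.
Import GRing.Theory Num.Theory.
Local Open Scope ring_scope.

(* Vertices of C_5: Z_5 (vertex 5 of the paper is 0 here). *)
Definition vert := 'Z_5.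

Definition zmap := vert -> 'cV[int]_2.

Definition det2 (u v : 'cV[int]_2) : int := \det (row_mx u v : 'M[int]_2).

Definition is_charmap (lam : zmap) : Prop := forall i : vert, det2 (lam i) (lam (i + 1)) != 0.

Definition nonsingular (lam : zmap) : Prop :=
  forall i : vert, det2 (lam i) (lam (i + 1)) \is a GRing.unit.

Definition simplexC5 (S : {set vert}) : bool :=
  (#|S| <= 1)%N || [exists i : vert, S == [set i; i + 1]].

Definition in_cone (R : realFieldType) (lam : zmap) (S : {set vert}) (x : 'cV[R]_2) : Prop :=
  exists c : vert -> R, (forall k, 0 <= c k) /\ (forall k, k \notin S -> c k = 0) /\
    x = \sum_(k : vert) c k *: map_mx (fun z : int => z%:~R) (lam k).

Definition fan_giving (R : realFieldType) (lam : zmap) : Prop :=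
  forall S T : {set vert}, simplexC5 S -> simplexC5 T ->
    forall x : 'cV[R]_2, (in_cone lam S x /\ in_cone lam T x) <-> in_cone lam (S :&: T) x.

Definition complete_fan (R : realFieldType) (lam : zmap) : Prop :=
  forall x : 'cV[R]_2, exists i : vert, in_cone lam [set i; i + 1] x.

Definition DJ_equiv (lam mu : zmap) : Prop :=
  exists A : 'M[int]_2, A \in unitmx /\ forall v, mu v = A *m lam v.

Definition lamd (d : int) : 'M[int]_(2, 5) :=
  \matrix_(r < 2, c < 5)
    (if r == 0 :> nat then [:: 1; 0; -1; -1; d]`_c else [:: 0; 1; 1; 0; -1]`_c).

(* lambda_d of type (i,d): column k (0-based) goes to vertex i+k+1,
   i.e. vertex v receives column v - i - 1. *)
Definition typed (i : vert) (d : int) : zmap :=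
  fun v => col (v - i - 1 : vert) (lamd d).

(* Main.v *)
Require Import Defs.
From mathcomp Require Import all_boot all_order all_algebra.
From mathcomp Require Import ring lra zify.
Import GRing.Theory Num.Theory.
Local Open Scope ring_scope.

Lemma det2E (u v : 'cV[int]_2) : det2 u v = u 0 0 * v 1 0 - u 1 0 * v 0 0.
Proof.
rewrite /det2 (expand_det_row _ 0) !big_ord_recl big_ord0 /cofactor.
rewrite !det_mx11 /= !mxE.
have l0 : lift (0 : 'I_2) 0 = 1 by apply/val_inj.
have l1 : lift (1 : 'I_2) (0 : 'I_1) = 0 by apply/val_inj.
rewrite ?l0 ?l1.
case: splitP => [j _|j]; last by case: j => [[]].
case: splitP => [j' |j' _]; first by case: j' => [[]].
rewrite !ord1 /= expr0 expr1. ring.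

Qed.
Lemma vec2P (T : Type) (x y : 'cV[T]_2) : x 0 0 = y 0 0 -> x 1 0 = y 1 0 -> x = y.
Proof.
move=> h0 h1; apply/matrixP => i j; rewrite (ord1 j).
case: i => [[|[|//]]] Hi.
- by rewrite (_ : Ordinal Hi = 0) //; apply/val_inj.
- by rewrite (_ : Ordinal Hi = 1) //; apply/val_inj.
Qed.

Lemma Z5_cases (k : vert) : k = 0 \/ k = 1 \/ k = 1 + 1 \/ k = 1 + 1 + 1 \/ k = 1 + 1 + 1 + 1.
Proof.
case: k => [[|[|[|[|[|//]]]]]] Hk.
- by left; apply/val_inj.
- by right; left; apply/val_inj.
- by right; right; left; apply/val_inj.
- by right; right; right; left; apply/val_inj.
- by right; right; right; right; apply/val_inj.
Qed.

Lemma add5 (v : vert) : v + 1 + 1 + 1 + 1 + 1 = v.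
Proof. rewrite -!addrA [X in v + X](_ : _ = 0); first by rewrite addr0. by apply/val_inj. Qed.

Lemma addc_eq (v c : vert) : (v + c == v) = (c == 0).
Proof. by rewrite -{2}[v]addr0 (inj_eq (addrI v)). Qed.

Lemma n1s (v : vert) : (v == v + 1) = false.
Proof. by rewrite eq_sym addc_eq. Qed.
Lemma n2s (v : vert) : (v == v + 1 + 1) = false.
Proof. by rewrite eq_sym -addrA addc_eq. Qed.
Lemma n3s (v : vert) : (v == v + 1 + 1 + 1) = false.
Proof. by rewrite eq_sym -!addrA addc_eq. Qed.
Lemma n1 (v : vert) : (v + 1 == v) = false.
Proof. by rewrite addc_eq. Qed.
Lemma n2 (v : vert) : (v + 1 + 1 == v) = false.
Proof. by rewrite -addrA addc_eq. Qed.
Lemma n3 (v : vert) : (v + 1 + 1 + 1 == v) = false.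
Proof. by rewrite -!addrA addc_eq. Qed.
Lemma n4 (v : vert) : (v + 1 + 1 + 1 + 1 == v) = false.
Proof. by rewrite -!addrA addc_eq. Qed.

Section Cone.
End Cone.

Definition Lv (R : realFieldType) (lam : zmap) (k : vert) : 'cV[R]_2 :=
  map_mx (fun z : int => z%:~R) (lam k).

Lemma sum2 (R : realFieldType) (lam : zmap) (c : vert -> R) (a b : vert) :
  a != b -> (forall k, k != a -> k != b -> c k = 0) ->
  \sum_(k : vert) c k *: map_mx (fun z : int => z%:~R) (lam k) =
  c a *: map_mx (fun z : int => z%:~R) (lam a) + c b *: map_mx (fun z : int => z%:~R) (lam b).
Proof.
move=> ab Hc.
rewrite (bigD1 a) //= (bigD1 b) /=; last by rewrite eq_sym.
rewrite big1 ?addr0 // => k /andP[kb ka]; by rewrite Hc ?scale0r.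
Qed.

Lemma cone_in2 (R : realFieldType) (lam : zmap) (a b : vert) (x : 'cV[R]_2) (al be : R) :
  a != b -> 0 <= al -> 0 <= be ->
  x 0 0 = al * (lam a 0 0)%:~R + be * (lam b 0 0)%:~R ->
  x 1 0 = al * (lam a 1 0)%:~R + be * (lam b 1 0)%:~R ->
  in_cone lam [set a; b] x.
Proof.
move=> ab ha hb h0 h1.
exists (fun k => if k == a then al else if k == b then be else 0); split; [|split].
- by move=> k; case: ifP => // _; case: ifP.
- move=> k; rewrite !inE => /norP[/negbTE -> /negbTE ->] //.
- rewrite (@sum2 R lam _ a b) //; last by move=> k /negbTE -> /negbTE ->.
  have -> : (b == a) = false by apply/negbTE; rewrite eq_sym.
  rewrite !eqxx.
  by apply: vec2P; rewrite !mxE.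
Qed.

Lemma cone_in1 (R : realFieldType) (lam : zmap) (a : vert) (x : 'cV[R]_2) (al : R) :
  0 <= al ->
  x 0 0 = al * (lam a 0 0)%:~R -> x 1 0 = al * (lam a 1 0)%:~R ->
  in_cone lam [set a] x.
Proof.
move=> ha h0 h1.
exists (fun k => if k == a then al else 0); split; [|split].
- by move=> k; case: ifP.
- by move=> k; rewrite !inE => /negbTE ->.
- rewrite (@sum2 R lam _ a (a+1)) ?n1s //; last by move=> k /negbTE ->.
  rewrite eqxx n1 scale0r addr0.
  by apply: vec2P; rewrite !mxE.
Qed.

Lemma cone_out2 (R : realFieldType) (lam : zmap) (a b : vert) (x : 'cV[R]_2) :
  a != b -> in_cone lam [set a; b] x ->
  exists al be : R, [/\ 0 <= al, 0 <= be,
  x 0 0 = al * (lam a 0 0)%:~R + be * (lam b 0 0)%:~R &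
  x 1 0 = al * (lam a 1 0)%:~R + be * (lam b 1 0)%:~R].
Proof.
move=> ab [c [c0 [cS ->]]].
rewrite (@sum2 R lam _ a b) //; last first.
  by move=> k ka kb; apply: cS; rewrite !inE negb_or ka kb.
by exists (c a), (c b); rewrite !mxE.
Qed.

Lemma cone_out0 (R : realFieldType) (lam : zmap) (x : 'cV[R]_2) :
  in_cone lam set0 x -> x 0 0 = 0 /\ x 1 0 = 0.
Proof.
move=> [c [c0 [cS ->]]].
rewrite big1 ?mxE // => k _; by rewrite cS ?inE // scale0r.
Qed.

Lemma cone_mono (R : realFieldType) (lam : zmap) (S T : {set vert}) (x : 'cV[R]_2) :
  S \subset T -> in_cone lam S x -> in_cone lam T x.
Proof.
move=> ST [c [c0 [cS ->]]]; exists c; split => //; split => // k kT.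
by apply: cS; apply: contra kT; apply: (subsetP ST).
Qed.
Lemma detlin (R : comRingType) (x0 x1 a0 a1 b0 b1 w0 w1 al be : R) :
  x0 = al * a0 + be * b0 -> x1 = al * a1 + be * b1 ->
  w0 * x1 - w1 * x0 = al * (w0 * a1 - w1 * a0) + be * (w0 * b1 - w1 * b0).
Proof. by move=> -> ->; ring. Qed.
Arguments detlin {R x0 x1 a0 a1 b0 b1} w0 w1 {al be}.

Lemma indep_real (R : realFieldType) (xa ya xb yb p q : R) :
  xa * yb - ya * xb != 0 -> p * xa + q * xb = 0 -> p * ya + q * yb = 0 -> p = 0 /\ q = 0.
Proof.
move=> nz h0 h1.
have ep : p * (xa * yb - ya * xb) = (p * xa + q * xb) * yb - (p * ya + q * yb) * xb by ring.
have eq : q * (xa * yb - ya * xb) = (p * ya + q * yb) * xa - (p * xa + q * xb) * ya by ring.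
rewrite h0 h1 !mul0r subrr in ep eq.
move: ep eq => /eqP; rewrite mulf_eq0 (negbTE nz) orbF => /eqP ->.
by move/eqP; rewrite mulf_eq0 (negbTE nz) orbF => /eqP ->.
Qed.

Lemma adj_real (R : realFieldType) (xu yu xw yw xz yz x0 x1 al be ga de : R) :
  xu * yw - yu * xw = 1 -> xw * yz - yw * xz = 1 -> 0 <= al -> 0 <= de ->
  x0 = al * xu + be * xw -> x1 = al * yu + be * yw ->
  x0 = ga * xw + de * xz -> x1 = ga * yw + de * yz -> al = 0.
Proof.
move=> d1 d2 ha hd h0 h1 h0' h1'.
have e1 := detlin xw yw h0 h1.
have e2 := detlin xw yw h0' h1'.
have : xw * yu - yw * xu = -1 by rewrite -d1; ring.
have : xw * yw - yw * xw = 0 by ring.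
move=> z1 z2. rewrite z1 z2 e2 z1 d2 in e1. lra.
Qed.

Lemma nonadj_real (R : realFieldType) (x0 y0 x1 y1 x2 y2 x3 y3 p q al be ga de a1 a2 : R) :
  x0 * y1 - y0 * x1 = 1 -> x1 * y2 - y1 * x2 = 1 -> x2 * y3 - y2 * x3 = 1 ->
  x0 * y2 - y0 * x2 = a1 -> x1 * y3 - y1 * x3 = a2 -> 0 <= a1 \/ 0 <= a2 ->
  0 <= al -> 0 <= be -> 0 <= ga -> 0 <= de ->
  p = al * x0 + be * x1 -> q = al * y0 + be * y1 ->
  p = ga * x2 + de * x3 -> q = ga * y2 + de * y3 -> p = 0 /\ q = 0.
Proof.
move=> d01 d12 d23 d02 d13 ha hal hbe hga hde hp hq hp' hq'.
have z00 : forall u v : R, u * v - v * u = 0 by move=> u v; ring.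
have sw : forall u v w z : R, w * v - z * u = - (u * z - v * w) by move=> *; ring.
case: ha => ha.
-
  have e1 := detlin y2 x2 hq hp. have e2 := detlin y2 x2 hq' hp'.
  rewrite !z00 in e1 e2.
  have f1 : y2 * y0 - x2 * x0 = y2 * y0 - x2 * x0 by [].
  move: e1 e2.
  rewrite (_ : y2 * x0 - x2 * y0 = a1); last by rewrite -d02; ring.
  rewrite (_ : y2 * x1 - x2 * y1 = 1); last by rewrite -d12; ring.
  rewrite (_ : y2 * x3 - x2 * y3 = -1); last by rewrite -d23; ring.
  move=> e1 e2.
  have hb : be = 0 by nra.
  have hd : de = 0 by nra.
  have hz : al * a1 = 0 by nra.
  have g1 := detlin x1 y1 hp hq. have g2 := detlin x1 y1 hp' hq'.
  rewrite !z00 in g1 g2.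
  move: g1 g2.
  rewrite (_ : x1 * y0 - y1 * x0 = -1); last by rewrite -d01; ring.
  rewrite d12 hb hd => g1 g2.
  have : al = 0 by lra.
  move=> h0; rewrite hp hq h0 hb; split; ring.
- have e1 := detlin x1 y1 hp hq. have e2 := detlin x1 y1 hp' hq'.
  rewrite !z00 in e1 e2.
  move: e1 e2.
  rewrite (_ : x1 * y0 - y1 * x0 = -1); last by rewrite -d01; ring.
  rewrite d12 d13 => e1 e2.
  have hz : 0 <= de * a2 by apply: mulr_ge0.
  have h0 : al = 0 by lra.
  have h1 : ga = 0 by lra.
  have g1 := detlin x2 y2 hp hq. have g2 := detlin x2 y2 hp' hq'.
  rewrite !z00 in g1 g2.
  move: g1 g2.
  rewrite (_ : x2 * y1 - y2 * x1 = -1); last by rewrite -d12; ring.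
  rewrite d23 h0 h1 => g1 g2.
  have hb : be = 0 by lra.
  rewrite hp hq h0 hb; split; ring.
Qed.

Arguments cone_out2 {R lam a b x}.
Arguments cone_in1 {R lam a x}.
Arguments cone_in2 {R lam a b x}.
Arguments adj_real {R xu yu xw yw xz yz x0 x1 al be ga de}.
Arguments nonadj_real {R x0 y0 x1 y1 x2 y2 x3 y3 p q al be ga de a1 a2}.
Lemma detR (R : realFieldType) (u v : 'cV[int]_2) :
  ((u 0 0)%:~R * (v 1 0)%:~R - (u 1 0)%:~R * (v 0 0)%:~R : R) = (det2 u v)%:~R.
Proof. by rewrite det2E intrB !intrM. Qed.

Lemma cone_in0 (R : realFieldType) (lam : zmap) (S : {set vert}) (x : 'cV[R]_2) :
  x 0 0 = 0 -> x 1 0 = 0 -> in_cone lam S x.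
Proof.
move=> h0 h1; exists (fun _ => 0); split => //; split => //.
rewrite big1 => [|k _]; last by rewrite scale0r.
by apply: vec2P; rewrite ?h0 ?h1 mxE.
Qed.

Definition Aval (lam : zmap) (v : vert) := det2 (lam v) (lam (v + 1 + 1)).

Lemma adj_cone (R : realFieldType) (lam : zmap) :
  (forall v, det2 (lam v) (lam (v + 1)) = 1) ->
  forall v (x : 'cV[R]_2), in_cone lam [set v; v + 1] x -> in_cone lam [set v + 1; v + 1 + 1] x ->
  in_cone lam [set v + 1] x.
Proof.
move=> D v x /(cone_out2 (negbT (n1s _))) [al [be [ha hb h0 h1]]] /(cone_out2 (negbT (n1s _))) [ga [de [hg hd h0' h1']]].
have d1 := D v; have d2 := D (v + 1).
move/(congr1 (fun z => z%:~R : R)): d1; rewrite -detR (_ : 1%:~R = 1) // => d1.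
move/(congr1 (fun z => z%:~R : R)): d2; rewrite -detR (_ : 1%:~R = 1) // => d2.
have := adj_real d1 d2 ha hd h0 h1 h0' h1' => z.
apply: (@cone_in1 _ _ _ _ be hb); by rewrite ?h0 ?h1 z !mul0r add0r.
Qed.

Lemma nonadj_cone (R : realFieldType) (lam : zmap) :
  (forall v, det2 (lam v) (lam (v + 1)) = 1) ->
  forall v (x : 'cV[R]_2), 0 <= Aval lam v \/ 0 <= Aval lam (v + 1) ->
  in_cone lam [set v; v + 1] x -> in_cone lam [set v + 1 + 1; v + 1 + 1 + 1] x ->
  x 0 0 = 0 /\ x 1 0 = 0.
Proof.
move=> D v x hA /(cone_out2 (negbT (n1s _))) [al [be [ha hb h0 h1]]] /(cone_out2 (negbT (n1s _))) [ga [de [hg hd h0' h1']]].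
have d1 := D v; have d2 := D (v + 1); have d3 := D (v + 1 + 1).
move/(congr1 (fun z => z%:~R : R)): d1; rewrite -detR (_ : 1%:~R = 1) // => d1.
move/(congr1 (fun z => z%:~R : R)): d2; rewrite -detR (_ : 1%:~R = 1) // => d2.
move/(congr1 (fun z => z%:~R : R)): d3; rewrite -detR (_ : 1%:~R = 1) // => d3.
have e1 := detR R (lam v) (lam (v + 1 + 1)).
have e2 := detR R (lam (v + 1)) (lam (v + 1 + 1 + 1)).
apply: (nonadj_real d1 d2 d3 e1 e2 _ ha hb hg hd h0 h1 h0' h1').
by case: hA => h; [left|right]; rewrite ler0z.
Qed.

Lemma face (R : realFieldType) (lam : zmap) (k : vert) (S U : {set vert}) (x : 'cV[R]_2) :
  det2 (lam k) (lam (k + 1)) != 0 -> S \subset [set k; k + 1] -> U \subset [set k; k + 1] ->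
  in_cone lam S x -> in_cone lam U x -> in_cone lam (S :&: U) x.
Proof.
move=> nz sS sU [c [c0 [cS ex]]] [c' [c0' [cU ex']]].
have sup : forall m, m != k -> m != k + 1 -> c m = 0.
  move=> m mk mk1; apply: cS; apply: contra mk => /(subsetP sS); rewrite !inE.
  by case/orP => // /eqP e; rewrite e eqxx in mk1.
have sup' : forall m, m != k -> m != k + 1 -> c' m = 0.
  move=> m mk mk1; apply: cU; apply: contra mk => /(subsetP sU); rewrite !inE.
  by case/orP => // /eqP e; rewrite e eqxx in mk1.
have kk : k != k + 1 by rewrite n1s.
have ex0 := ex.
rewrite (@sum2 R lam _ k (k + 1)) // in ex.
rewrite (@sum2 R lam _ k (k + 1)) // in ex'.
have e0 := congr1 (fun M : 'cV[R]_2 => M 0 0) (etrans (esym ex) ex').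
have e1 := congr1 (fun M : 'cV[R]_2 => M 1 0) (etrans (esym ex) ex').
rewrite /= !mxE in e0 e1.
have nz' : ((lam k 0 0)%:~R * (lam (k + 1) 1 0)%:~R - (lam k 1 0)%:~R * (lam (k + 1) 0 0)%:~R : R) != 0.
  by rewrite detR intr_eq0.
have [p0 q0] := @indep_real R _ _ _ _ (c k - c' k) (c (k + 1) - c' (k + 1)) nz' ltac:(lra) ltac:(lra).
exists c; split => //; split; last exact: ex0; move=> m; rewrite inE negb_and => /orP [mS|mU]; first exact: cS.
case: (eqVneq m k) => [em|mk].
  by move/eqP: p0; rewrite subr_eq0 => /eqP; rewrite em => ->; apply: cU; rewrite -em.
case: (eqVneq m (k + 1)) => [em|mk1]; last exact: sup.
by move/eqP: q0; rewrite subr_eq0 => /eqP; rewrite em => ->; apply: cU; rewrite -em.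
Qed.

Arguments cone_mono {R lam S T x}.
Arguments cone_in0 {R lam S x}.
Arguments adj_cone {R lam} D {v x}.
Arguments nonadj_cone {R lam} D {v x}.

Lemma simplex_sub (S : {set vert}) : simplexC5 S -> exists k, S \subset [set k; k + 1].
Proof.
case/orP => [c1|/existsP [i /eqP ->]]; last by exists i.
case: (set_0Vmem S) => [->|[a aS]]; first by exists 0; rewrite sub0set.
exists a; apply/subsetP => b bS; rewrite !inE.
by move/card_le1_eqP: c1 => /(_ b a bS aS) ->; rewrite eqxx.
Qed.

Lemma edge_cone (R : realFieldType) (lam : zmap) :
  (forall v, det2 (lam v) (lam (v + 1)) = 1) ->
  (forall v, 0 <= Aval lam v \/ 0 <= Aval lam (v + 1)) ->
  forall j k (x : 'cV[R]_2), in_cone lam [set j; j + 1] x -> in_cone lam [set k; k + 1] x ->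
  in_cone lam ([set j; j + 1] :&: [set k; k + 1]) x.
Proof.
move=> D A j k x hj hk.
have ek : k = j + (k - j) by rewrite addrC subrK.
have [e|[e|[e|[e|e]]]] := Z5_cases (k - j); rewrite e in ek; subst k.
- by rewrite addr0 setIid.
- apply: cone_mono (adj_cone D hj hk).
  by rewrite subsetI !sub1set !inE !eqxx !orbT.
- rewrite addrA in hk *.
  by have [h0 h1] := nonadj_cone D (A j) hj hk; apply: cone_in0.
- set k := j + (1 + 1 + 1) in hk *.
  have ej : j = k + 1 + 1 by rewrite /k !addrA add5.
  clearbody k; subst j.
  by have [h0 h1] := nonadj_cone D (A k) hk hj; apply: cone_in0.
- set k := j + (1 + 1 + 1 + 1) in hk *.
  have ej : j = k + 1 by rewrite /k !addrA add5.
  clearbody k; subst j.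
  apply: cone_mono (adj_cone D hk hj).
  by rewrite subsetI !sub1set !inE !eqxx !orbT.
Qed.

Arguments face {R lam k S U x}.
Arguments edge_cone {R lam} D A {j k x}.
Lemma fan_of (R : realFieldType) (lam : zmap) :
  (forall v, det2 (lam v) (lam (v + 1)) = 1) ->
  (forall v, 0 <= Aval lam v \/ 0 <= Aval lam (v + 1)) ->
  fan_giving R lam.
Proof.
move=> D A S T sS sT x; split; last first.
  by move=> h; split; apply: cone_mono h; [apply: subsetIl | apply: subsetIr].
case=> hS hT.
have [k sk] := simplex_sub _ sS; have [j sj] := simplex_sub _ sT.
have hE := edge_cone D A (cone_mono sk hS) (cone_mono sj hT).
have nzk : det2 (lam k) (lam (k + 1)) != 0 by rewrite D.
have nzj : det2 (lam j) (lam (j + 1)) != 0 by rewrite D.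
have h1 := face nzk sk (subsetIl _ _) hS hE.
have sub2 : S :&: ([set k; k + 1] :&: [set j; j + 1]) \subset [set j; j + 1].
  by apply/subsetP => y; rewrite !inE => /andP[_ /andP[_ ->]].
have h2 := face nzj sub2 sj h1 hT.
apply: cone_mono h2.
by apply/subsetP => y; rewrite !inE => /andP[/andP[-> _] ->].
Qed.

Lemma typedE (i : vert) (d : int) (k : vert) (r : 'I_2) :
  typed i d (i + k) r 0 = lamd d r (k - 1).
Proof. by rewrite /typed mxE (addrC i) addrK. Qed.

Lemma D_typed (i : vert) (d : int) (v : vert) : det2 (typed i d v) (typed i d (v + 1)) = 1.
Proof.
have -> : v = i + (v - i) by rewrite addrC subrK.
move: (v - i) => k; rewrite -addrA det2E !typedE.
by case: (Z5_cases k) => [|[|[|[|]]]] ->; rewrite ?mxE /=; ring.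
Qed.

Lemma Aval_typed (i : vert) (d : int) (k : vert) :
  Aval (typed i d) (i + k) = [:: d; 1; 1; 1 - d; 0]`_k.
Proof.
rewrite /Aval -!addrA det2E !typedE.
by case: (Z5_cases k) => [|[|[|[|]]]] ->; rewrite ?mxE /=; ring.
Qed.

Lemma A_typed (i : vert) (d : int) (v : vert) :
  0 <= Aval (typed i d) v \/ 0 <= Aval (typed i d) (v + 1).
Proof.
have -> : v = i + (v - i) by rewrite addrC subrK.
move: (v - i) => k; rewrite -addrA !Aval_typed.
by case: (Z5_cases k) => [|[|[|[|]]]] ->; [right|left|left|right|left].
Qed.

Lemma complete_typed (R : realFieldType) (i : vert) (d : int) : complete_fan R (typed i d).
Proof.
move=> x.
set x0 := x 0 0; set x1 := x 1 0; set dd := (d%:~R : R).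
have nn : forall k : vert, k != k + 1 by move=> k; rewrite n1s.
have [h1|h1] := lerP 0 x1.
  have [h0|h0] := lerP 0 x0.
    exists (i + 1); apply: (cone_in2 x0 x1 (nn _)) => //;
    rewrite -?addrA !typedE !mxE /= ?intrN ?mulr1z ?mulr0z /x0 /x1; ring.
  have [h2|h2] := lerP 0 (x0 + x1).
    exists (i + (1 + 1)); apply: (cone_in2 (x0 + x1) (- x0) (nn _)); try lra;
    rewrite -?addrA !typedE !mxE /= ?intrN ?mulr1z ?mulr0z /x0 /x1; ring.
  exists (i + (1 + 1 + 1)); apply: (cone_in2 x1 (- x0 - x1) (nn _)); try lra;
  rewrite -?addrA !typedE !mxE /= ?intrN ?mulr1z ?mulr0z /x0 /x1; ring.
have [h2|h2] := lerP 0 (x0 + dd * x1).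
  exists i; rewrite -[in [set i; _]](addr0 i).
  apply: (cone_in2 (- x1) (x0 + dd * x1) (nn _)); try lra;
  rewrite -?addrA !typedE !mxE /= ?intrN ?mulr1z ?mulr0z /x0 /x1 /dd; ring.
exists (i + (1 + 1 + 1 + 1)); apply: (cone_in2 (- x0 - dd * x1) (- x1) (nn _)); try lra;
rewrite -?addrA !typedE !mxE /= ?intrN ?mulr1z ?mulr0z /x0 /x1 /dd; ring.
Qed.

Lemma part1 (R : realFieldType) (i : vert) (d : int) :
  [/\ is_charmap (typed i d), nonsingular (typed i d),
      fan_giving R (typed i d) & complete_fan R (typed i d)].
Proof.
split.
- by move=> v; rewrite D_typed oner_neq0.
- by move=> v; rewrite D_typed unitr1.
- exact: fan_of (D_typed i d) (A_typed i d).
- exact: complete_typed.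
Qed.

Lemma detM22 (M : 'M[int]_2) : \det M = M 0 0 * M 1 1 - M 0 1 * M 1 0.
Proof.
rewrite (expand_det_row _ 0) !big_ord_recl big_ord0 /cofactor.
rewrite !det_mx11 /= !mxE.
have l0 : lift (0 : 'I_2) 0 = 1 by apply/val_inj.
have l1 : lift (1 : 'I_2) (0 : 'I_1) = 0 by apply/val_inj.
rewrite ?l0 ?l1 /= expr0 expr1. ring.
Qed.

Lemma mul2E (M : 'M[int]_2) (u : 'cV[int]_2) (r : 'I_2) :
  (M *m u) r 0 = M r 0 * u 0 0 + M r 1 * u 1 0.
Proof.
rewrite mxE !big_ord_recl big_ord0 addr0.
by have -> : lift ord0 ord0 = 1 :> 'I_2 by apply/val_inj.
Qed.

Lemma det2_mul (M : 'M[int]_2) (u v : 'cV[int]_2) :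
  det2 (M *m u) (M *m v) = \det M * det2 u v.
Proof. by rewrite /det2 -mul_mx_row det_mulmx. Qed.

Lemma part3a (i j : vert) (d e : int) :
  DJ_equiv (typed i d) (typed j e) ->
  [\/ i = j /\ d = e, [/\ d = 0, j = i + 1 & e = 1] | [/\ e = 0, i = j + 1 & d = 1]].
Proof.
case=> M [_ HM].
have dM : \det M = 1 by have := D_typed j e 0; rewrite !HM det2_mul D_typed mulr1.
have G : forall v, Aval (typed j e) v = Aval (typed i d) v.
  by move=> v; rewrite /Aval !HM det2_mul dM mul1r.
have [t ej] : exists t, j = i + t by exists (j - i); rewrite addrC subrK.
subst j.
have G' : forall k : vert, [:: e; 1; 1; 1 - e; 0]`_(k - t)%R = [:: d; 1; 1; 1 - d; 0]`_k.
  move=> k; have := G (i + k); rewrite (Aval_typed i d k).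
  rewrite (_ : i + k = (i + t) + (k - t)); first by rewrite Aval_typed; move=> ->.
  by rewrite -addrA (addrC t) subrK.
move: (G' 0) (G' 1) (G' (1 + 1)) (G' (1 + 1 + 1)) (G' (1 + 1 + 1 + 1)).
case: (Z5_cases t) => [|[|[|[|]]]] -> /= g0 g1 g2 g3 g4.
- by constructor 1; rewrite addr0.
- by constructor 2.
- by move: g1.
- by move: g2.
- constructor 3; split => //.
  by rewrite !addrA add5.
Qed.

Lemma part3b (i j : vert) (d e : int) :
  [\/ i = j /\ d = e, [/\ d = 0, j = i + 1 & e = 1] | [/\ e = 0, i = j + 1 & d = 1]] ->
  DJ_equiv (typed i d) (typed j e).
Proof.
case=> [[-> ->]|[-> -> ->]|[-> -> ->]].
- by exists 1%:M; split; [exact: unitmx1 | move=> v; rewrite mul1mx].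
- exists (\matrix_(r < 2, c < 2) (if r == 0 :> nat then 1 else (if c == 0 :> nat then -1 else 0)) : 'M[int]_2).
  split; first by rewrite unitmxE detM22 !mxE.
  move=> v; have -> : v = (i + 1) + (v - i - 1) by ring.
  move: (v - i - 1) => k.
  have e1 : i + 1 + k - (i + 1) - 1 = k - 1 by ring.
  have e2 : i + 1 + k - i - 1 = k by ring.
  apply: vec2P; rewrite !mul2E /typed !mxE e1 e2;
  by case: (Z5_cases k) => [|[|[|[|]]]] ->; rewrite ?mxE /=; ring.
- exists (\matrix_(r < 2, c < 2) (if r == 0 :> nat then (if c == 0 :> nat then 0 else -1) else 1) : 'M[int]_2).
  split; first by rewrite unitmxE detM22 !mxE.
  move=> v; have -> : v = (j + 1) + (v - j - 1) by ring.
  move: (v - j - 1) => k.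
  have e1 : j + 1 + k - (j + 1) - 1 = k - 1 by ring.
  have e2 : j + 1 + k - j - 1 = k by ring.
  apply: vec2P; rewrite !mul2E /typed !mxE e1 e2;
  by case: (Z5_cases k) => [|[|[|[|]]]] ->; rewrite ?mxE /=; ring.
Qed.

Lemma unit_int (x : int) : x \is a GRing.unit -> x = 1 \/ x = -1.
Proof. rewrite qualifE /= => /orP[/eqP|/eqP]; auto. Qed.

Lemma Z5_ind (P : vert -> Prop) : P 0 -> (forall v, P v -> P (v + 1)) -> forall v, P v.
Proof.
move=> P0 PS v; rewrite -(natr_Zp v); elim: (nat_of_ord v) => [//|n IH].
by rewrite -[n.+1]addn1 natrD; apply: PS.
Qed.

Lemma simp1 (a : vert) : simplexC5 [set a].
Proof. by rewrite /simplexC5 cards1. Qed.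

Lemma simp2 (a : vert) : simplexC5 [set a; a + 1].
Proof. by apply/orP; right; apply/existsP; exists a. Qed.

Lemma fan_disj (R : realFieldType) (lam : zmap) (S T : {set vert}) (x : 'cV[R]_2) :
  fan_giving R lam -> simplexC5 S -> simplexC5 T -> S :&: T = set0 ->
  in_cone lam S x -> in_cone lam T x -> x 0 0 = 0 /\ x 1 0 = 0.
Proof.
move=> F sS sT e hS hT.
have := (F S T sS sT x).1 (conj hS hT); rewrite e; exact: cone_out0.
Qed.

Arguments fan_disj {R lam S T x}.
Lemma Lv_entry (R : realFieldType) (lam : zmap) w r :
  Lv R lam w r 0 = (lam w r 0)%:~R.
Proof. by rewrite /Lv mxE. Qed.

Lemma orient_aux (R : realFieldType) (lam : zmap) (v : vert) (s : int) :
  fan_giving R lam -> s * s = 1 ->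
  det2 (lam v) (lam (v + 1)) = s -> det2 (lam (v + 1)) (lam (v + 1 + 1)) = - s -> False.
Proof.
move=> F hs; rewrite !det2E => h1 h2.
set X0 := lam v 0 0 in h1 h2 *; set Y0 := lam v 1 0 in h1 h2 *.
set X1 := lam (v + 1) 0 0 in h1 h2 *; set Y1 := lam (v + 1) 1 0 in h1 h2 *.
set X2 := lam (v + 1 + 1) 0 0 in h1 h2 *; set Y2 := lam (v + 1 + 1) 1 0 in h1 h2 *.
set b := s * (X0 * Y2 - Y0 * X2).
have cX : (X0 * Y1 - Y0 * X1) * X2 + (X1 * Y2 - Y1 * X2) * X0 + (X2 * Y0 - Y2 * X0) * X1 = 0 by ring.
have cY : (X0 * Y1 - Y0 * X1) * Y2 + (X1 * Y2 - Y1 * X2) * Y0 + (X2 * Y0 - Y2 * X0) * Y1 = 0 by ring.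
rewrite h1 h2 in cX cY.
have eX : X2 = X0 + b * X1.
  apply/eqP; rewrite -subr_eq0; apply/eqP.
  transitivity (s * (s * X2 + - s * X0 + (X2 * Y0 - Y2 * X0) * X1) + (1 - s * s) * (X2 - X0)).
    by rewrite /b; ring.
  by rewrite cX hs; ring.
have eY : Y2 = Y0 + b * Y1.
  apply/eqP; rewrite -subr_eq0; apply/eqP.
  transitivity (s * (s * Y2 + - s * Y0 + (X2 * Y0 - Y2 * X0) * Y1) + (1 - s * s) * (Y2 - Y0)).
    by rewrite /b; ring.
  by rewrite cY hs; ring.
clearbody b.
have [hb|hb] := lerP 0 b.
- have hS : in_cone lam [set v + 1 + 1] (Lv R lam (v + 1 + 1)).
    by apply: (cone_in1 1); rewrite ?Lv_entry ?mul1r.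
  have hT : in_cone lam [set v; v + 1] (Lv R lam (v + 1 + 1)).
    apply: (cone_in2 1 b%:~R (negbT (n1s _))) => //; first by rewrite ler0z.
      by rewrite Lv_entry -/X2 eX intrD intrM mul1r.
    by rewrite Lv_entry -/Y2 eY intrD intrM mul1r.
  have e : [set v + 1 + 1] :&: [set v; v + 1] = set0.
    by apply/setP => y; rewrite !inE; case: (eqVneq y (v + 1 + 1)) => //= ->; rewrite n2 n1.
  have [z0 z1] := fan_disj F (simp1 _) (simp2 _) e hS hT.
  move: z0 z1; rewrite !Lv_entry -/X2 -/Y2 => /eqP; rewrite intr_eq0 => /eqP z0 /eqP.
  rewrite intr_eq0 => /eqP z1.
  rewrite z0 z1 in h2; nia.
- have hS : in_cone lam [set v] (Lv R lam v).
    by apply: (cone_in1 1); rewrite ?Lv_entry ?mul1r.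
  have hT : in_cone lam [set v + 1; v + 1 + 1] (Lv R lam v).
    apply: (cone_in2 (- b)%:~R 1 (negbT (n1s _))) => //; first by rewrite ler0z oppr_ge0; apply: Order.POrderTheory.ltW.
      by rewrite Lv_entry -/X0 -/X1 -/X2 eX !intrD !intrM intrN mul1r; ring.
    by rewrite Lv_entry -/Y0 -/Y1 -/Y2 eY !intrD !intrM intrN mul1r; ring.
  have e : [set v] :&: [set v + 1; v + 1 + 1] = set0.
    by apply/setP => y; rewrite !inE; case: (eqVneq y v) => //= ->; rewrite n1s eq_sym n2.
  have [z0 z1] := fan_disj F (simp1 _) (simp2 _) e hS hT.
  move: z0 z1; rewrite !Lv_entry -/X0 -/Y0 => /eqP; rewrite intr_eq0 => /eqP z0 /eqP.
  rewrite intr_eq0 => /eqP z1.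
  rewrite z0 z1 in h1; nia.
Qed.

Lemma all_D (R : realFieldType) (lam : zmap) :
  nonsingular lam -> fan_giving R lam ->
  exists s : int, s * s = 1 /\ forall v, det2 (lam v) (lam (v + 1)) = s.
Proof.
move=> NS F.
have step : forall v, det2 (lam (v + 1)) (lam (v + 1 + 1)) = det2 (lam v) (lam (v + 1)).
  move=> v; case: (unit_int _ (NS v)) => h1; case: (unit_int _ (NS (v + 1))) => h2.
  - by rewrite h1 h2.
  - by case: (@orient_aux R lam v 1 F erefl h1 h2).
  - by case: (@orient_aux R lam v (-1) F erefl h1); rewrite h2 opprK.
  - by rewrite h1 h2.
exists (det2 (lam 0) (lam (0 + 1))); split.
  by case: (unit_int _ (NS 0)) => ->.
apply: Z5_ind => [//|v IH]; by rewrite step.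
Qed.

Lemma I1 (lam : zmap) (s : int) : s * s = 1 -> (forall v, det2 (lam v) (lam (v + 1)) = s) ->
  forall v, (lam v 0 0 + lam (v + 1 + 1) 0 0 = s * Aval lam v * lam (v + 1) 0 0) /\
            (lam v 1 0 + lam (v + 1 + 1) 1 0 = s * Aval lam v * lam (v + 1) 1 0).
Proof.
move=> hs HD v; have h1 := HD v; have h2 := HD (v + 1).
rewrite /Aval !det2E in h1 h2 *.
set X0 := lam v 0 0 in h1 h2 *; set Y0 := lam v 1 0 in h1 h2 *.
set X1 := lam (v + 1) 0 0 in h1 h2 *; set Y1 := lam (v + 1) 1 0 in h1 h2 *.
set X2 := lam (v + 1 + 1) 0 0 in h1 h2 *; set Y2 := lam (v + 1 + 1) 1 0 in h1 h2 *.
have cX : (X0 * Y1 - Y0 * X1) * X2 + (X1 * Y2 - Y1 * X2) * X0 + (X2 * Y0 - Y2 * X0) * X1 = 0 by ring.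
have cY : (X0 * Y1 - Y0 * X1) * Y2 + (X1 * Y2 - Y1 * X2) * Y0 + (X2 * Y0 - Y2 * X0) * Y1 = 0 by ring.
rewrite h1 h2 in cX cY.
split; apply/eqP; rewrite -subr_eq0; apply/eqP.
- transitivity (s * (s * X2 + s * X0 + (X2 * Y0 - Y2 * X0) * X1) + (1 - s * s) * (X2 + X0)); first by ring.
  by rewrite cX hs; ring.
- transitivity (s * (s * Y2 + s * Y0 + (X2 * Y0 - Y2 * X0) * Y1) + (1 - s * s) * (Y2 + Y0)); first by ring.
  by rewrite cY hs; ring.
Qed.

Lemma I2 (lam : zmap) (s : int) : s * s = 1 -> (forall v, det2 (lam v) (lam (v + 1)) = s) ->
  forall v, (s * Aval lam v) * (s * Aval lam (v + 1)) + s * Aval lam (v + 1 + 1 + 1) = 1.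
Proof.
move=> hs HD v; have h01 := HD v; have h12 := HD (v + 1); have h23 := HD (v + 1 + 1).
rewrite /Aval add5 !det2E in h01 h12 h23 *.
set X0 := lam v 0 0 in h01 h12 h23 *; set Y0 := lam v 1 0 in h01 h12 h23 *.
set X1 := lam (v + 1) 0 0 in h01 h12 h23 *; set Y1 := lam (v + 1) 1 0 in h01 h12 h23 *.
set X2 := lam (v + 1 + 1) 0 0 in h01 h12 h23 *; set Y2 := lam (v + 1 + 1) 1 0 in h01 h12 h23 *.
set X3 := lam (v + 1 + 1 + 1) 0 0 in h01 h12 h23 *; set Y3 := lam (v + 1 + 1 + 1) 1 0 in h01 h12 h23 *.
transitivity (s * s * ((X0 * Y1 - Y0 * X1) * (X2 * Y3 - Y2 * X3) + (X0 * Y3 - Y0 * X3) * (X1 * Y2 - Y1 * X2))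
  + s * (X3 * Y0 - Y3 * X0)); first by ring.
rewrite h01 h23 h12 hs mul1r; ring.
Qed.

Lemma Aneg (R : realFieldType) (lam : zmap) (s : int) : fan_giving R lam -> s * s = 1 ->
  (forall v, det2 (lam v) (lam (v + 1)) = s) ->
  forall v, ~ (s * Aval lam v < 0 /\ s * Aval lam (v + 1) < 0).
Proof.
move=> F hs HD v [n0 n1].
have [e0 f0] := I1 _ _ hs HD v.
have [e1 f1] := I1 _ _ hs HD (v + 1).
have h12 := HD (v + 1); rewrite det2E in h12.
move: n0 n1 e0 f0 e1 f1 h12.
move: (s * Aval lam v) (s * Aval lam (v + 1)) => a0 a1 n0 n1 e0 f0 e1 f1 h12.
move/(congr1 (fun z => z%:~R : R)): e0; rewrite !intrD !intrM => e0.
move/(congr1 (fun z => z%:~R : R)): f0; rewrite !intrD !intrM => f0.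
move/(congr1 (fun z => z%:~R : R)): e1; rewrite !intrD !intrM => e1.
move/(congr1 (fun z => z%:~R : R)): f1; rewrite !intrD !intrM => f1.
have n0' : (a0%:~R : R) <= -1.
  have h : a0 <= -1 by lia.
  by move: h; rewrite -(ler_int R) intrN ?mulr1z.
have n1' : (a1%:~R : R) <= -1.
  have h : a1 <= -1 by lia.
  by move: h; rewrite -(ler_int R) intrN ?mulr1z.
set x : 'cV[R]_2 := - (Lv R lam (v + 1) + Lv R lam (v + 1 + 1)).
have hS : in_cone lam [set v; v + 1] x.
  apply: (cone_in2 1 (- a0%:~R - 1) (negbT (n1s _))) => //; try lra;
  rewrite /x !mxE; lra.
have hT : in_cone lam [set v + 1 + 1; v + 1 + 1 + 1] x.
  apply: (cone_in2 (- a1%:~R - 1) 1 (negbT (n1s _))) => //; try lra;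
  rewrite /x !mxE; lra.
have e : [set v; v + 1] :&: [set v + 1 + 1; v + 1 + 1 + 1] = set0.
  apply/setP => y; rewrite !inE.
  case: (eqVneq y v) => [->|_]; first by rewrite n2s n3s.
  case: (eqVneq y (v + 1)) => [->|_] //=; by rewrite n1s n2s.
have [z0 z1] := fan_disj F (simp2 _) (simp2 _) e hS hT.
move: z0 z1; rewrite /x !mxE => z0 z1.
have w0 : lam (v + 1) 0 0 + lam (v + 1 + 1) 0 0 = 0.
  by apply/eqP; rewrite -(intr_eq0 R) intrD; apply/eqP; lra.
have w1 : lam (v + 1) 1 0 + lam (v + 1 + 1) 1 0 = 0.
  by apply/eqP; rewrite -(intr_eq0 R) intrD; apply/eqP; lra.
have : lam (v + 1 + 1) 0 0 = - lam (v + 1) 0 0 by lia.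
have : lam (v + 1 + 1) 1 0 = - lam (v + 1) 1 0 by lia.
move=> q1 q0; rewrite q0 q1 in h12; nia.
Qed.

Lemma signs (a : vert -> int) :
  (forall v, a v * a (v + 1) + a (v + 1 + 1 + 1) = 1) ->
  (forall v, ~ (a v < 0 /\ a (v + 1) < 0)) -> exists v, a v = 0.
Proof.
move=> H N.
have c1 : (0 + 1 : vert) = 1 by apply/val_inj.
have c5 : (1 + 1 + 1 + 1 + 1 : vert) = 0 by apply/val_inj.
have c6 : (1 + 1 + 1 + 1 + 1 + 1 : vert) = 1 by apply/val_inj.
have c7 : (1 + 1 + 1 + 1 + 1 + 1 + 1 : vert) = 1 + 1 by apply/val_inj.
have c3 : (0 + 1 + 1 + 1 : vert) = 1 + 1 + 1 by apply/val_inj.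
move: (H 0) (H 1) (H (1 + 1)) (H (1 + 1 + 1)) (H (1 + 1 + 1 + 1)).
move: (N 0) (N 1) (N (1 + 1)) (N (1 + 1 + 1)) (N (1 + 1 + 1 + 1)).
rewrite ?c1 ?c3 ?c5 ?c6 ?c7.
have [z|z] := eqVneq (a 0) 0; first by move=> *; exists 0.
have [z1|z1] := eqVneq (a 1) 0; first by move=> *; exists 1.
have [z2|z2] := eqVneq (a (1 + 1)) 0; first by move=> *; exists (1 + 1).
have [z3|z3] := eqVneq (a (1 + 1 + 1)) 0; first by move=> *; exists (1 + 1 + 1).
have [z4|z4] := eqVneq (a (1 + 1 + 1 + 1)) 0; first by move=> *; exists (1 + 1 + 1 + 1).
move: z z1 z2 z3 z4.
move: (a 0) (a 1) (a (1 + 1)) (a (1 + 1 + 1)) (a (1 + 1 + 1 + 1)) => a0 a1 a2 a3 a4.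
move=> z0 z1 z2 z3 z4 N0 N1 N2 N3 N4 H0 H1 H2 H3 H4; exfalso.
have s0 : a0 < 0 \/ 0 < a0 by lia.
have s1 : a1 < 0 \/ 0 < a1 by lia.
have s2 : a2 < 0 \/ 0 < a2 by lia.
have s3 : a3 < 0 \/ 0 < a3 by lia.
have s4 : a4 < 0 \/ 0 < a4 by lia.
case: s0 => s0; case: s1 => s1; case: s2 => s2; case: s3 => s3; case: s4 => s4;
  first [ by apply: N0 | by apply: N1 | by apply: N2 | by apply: N3 | by apply: N4 | nia ].
Qed.

Lemma part2 (R : realFieldType) (lam : zmap) :
  is_charmap lam -> nonsingular lam -> fan_giving R lam -> complete_fan R lam ->
  exists (i : vert) (d : int), DJ_equiv lam (typed i d).
Proof.
move=> _ NS F _.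
have [s [hs HD]] := all_D _ _ NS F.
have [v av] := signs (fun v => s * Aval lam v) (I2 _ _ hs HD) (Aneg _ _ _ F hs HD).
have [e0 f0] := I1 _ _ hs HD v.
rewrite av !mul0r in e0 f0.
have sv : s = 1 \/ s = -1 by rewrite -(HD 0); exact: unit_int _ (NS 0).
exists (v + 1), (s * Aval lam (v + 1)).
set X2 := lam (v + 1 + 1) 0 0; set Y2 := lam (v + 1 + 1) 1 0.
set X3 := lam (v + 1 + 1 + 1) 0 0; set Y3 := lam (v + 1 + 1 + 1) 1 0.
exists (\matrix_(r < 2, c < 2) (if r == 0 :> nat then (if c == 0 :> nat then s * Y3 else - (s * X3))
                                 else (if c == 0 :> nat then - (s * Y2) else s * X2)) : 'M[int]_2).
have d2 := HD (v + 1 + 1); rewrite det2E -/X2 -/Y2 -/X3 -/Y3 in d2.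
split.
  rewrite unitmxE detM22 !mxE /=.
  have -> : s * Y3 * (s * X2) - - (s * X3) * - (s * Y2) = s * s * (X2 * Y3 - Y2 * X3) by ring.
  by rewrite d2 hs mul1r; case: sv => ->.
have d0 := HD v; have d1 := HD (v + 1); have d3 := HD (v + 1 + 1 + 1); have d4 := HD (v + 1 + 1 + 1 + 1).
rewrite add5 !det2E in d0 d1 d3 d4.
set X0 := lam v 0 0 in d0 d1 d3 d4 e0 f0 *; set Y0 := lam v 1 0 in d0 d1 d3 d4 e0 f0 *.
set X1 := lam (v + 1) 0 0 in d0 d1 d3 d4 e0 f0 *; set Y1 := lam (v + 1) 1 0 in d0 d1 d3 d4 e0 f0 *.
set X4 := lam (v + 1 + 1 + 1 + 1) 0 0 in d0 d1 d3 d4 e0 f0 *.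
set Y4 := lam (v + 1 + 1 + 1 + 1) 1 0 in d0 d1 d3 d4 e0 f0 *.
rewrite /Aval det2E -/X1 -/Y1.
move=> w; have -> : w = (v + 1) + (w - (v + 1)) by rewrite addrC subrK.
move: (w - (v + 1)) => k.
apply: vec2P; rewrite !mul2E !typedE !mxE /=;
case: (Z5_cases k) => [|[|[|[|]]]] ->; rewrite ?addrA ?add5 ?addr0 ?mxE /=;
  rewrite -?/X0 -?/Y0 -?/X1 -?/Y1 -?/X2 -?/Y2 -?/X3 -?/Y3 -?/X4 -?/Y4; case: sv => hsv;
  rewrite hsv in d0 d1 d2 d3 d4 *; nia.
Qed.

Theorem lemma6p7 (R : realFieldType) :
  (forall (i : vert) (d : int),
     [/\ is_charmap (typed i d), nonsingular (typed i d),
         fan_giving R (typed i d) & complete_fan R (typed i d)])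
  /\ (forall lam : zmap,
        is_charmap lam -> nonsingular lam -> fan_giving R lam -> complete_fan R lam ->
        exists (i : vert) (d : int), DJ_equiv lam (typed i d))
  /\ (forall (i j : vert) (d e : int),
        DJ_equiv (typed i d) (typed j e) <->
        [\/ i = j /\ d = e,
            [/\ d = 0, j = i + 1 & e = 1]
          | [/\ e = 0, i = j + 1 & d = 1]]).
Proof.
split; first by move=> i d; exact: part1.
split; first by move=> lam; exact: part2.
by move=> i j d e; split; [exact: part3a | exact: part3b].
Qed.
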